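(* Let $Z=Z(t)$ be the unique formal power series in $t$ with $Z(0)=0$ and $Z=t(1+Z)^4/(1+Z^2)$, and let $\mu=\mu(t,u)$ be the unique formal power series in $t$ satisfying $$\mu=(u-1)\frac{(1+Z^2)(1+\mu Z)(1+\mu Z^2)(1+\mu Z^3)}{(1+Z)(1+Z+Z^2)(1-Z)^3(1-\mu Z^2)}.$$ Write $v=\frac{(u-1)Z(1+Z^2)}{(1+Z)(1+Z+Z^2)(1-Z)^3}$. Then $$\mu(t,u)=\frac{1}{Z^2}\left(\frac{2}{1+v(1-Z)^2/3+\frac23\sqrt{3+v^2(1-Z)^4}\,\cos(\phi/3)}-1\right),$$ where $\phi=\arccos\left(\dfrac{-9v(1+4Z+Z^2)+v^3(1-Z)^6}{(3+v^2(1-Z)^4)^{3/2}}\right)$. *)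

(* Defs.v *)
From Stdlib Require Import Reals.
From Coquelicot Require Import Coquelicot.
Open Scope R_scope.

Definition fps := nat -> R.

Definition fconst (c : R) : fps := fun n => match n with O => c | _ => 0 end.
Definition fX : fps := fun n => match n with 1%nat => 1 | _ => 0 end.
Definition fadd (a b : fps) : fps := fun n => a n + b n.
Definition fsub (a b : fps) : fps := fun n => a n - b n.
Definition fmul (a b : fps) : fps :=
  fun n => sum_f_R0 (fun k => a k * b (n - k)%nat) n.
Fixpoint fpow (a : fps) (k : nat) : fps :=
  match k with O => fconst 1 | S k' => fmul a (fpow a k') end.

(* Z = t (1+Z)^4 / (1+Z^2), with denominators cleared (1+Z^2 is invertible) *)
Definition Z_eqn (z : fps) : Prop :=
  z 0%nat = 0 /\
  fmul z (fadd (fconst 1) (fpow z 2)) = fmul fX (fpow (fadd (fconst 1) z) 4).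

(* mu = (u-1)(1+Z^2)(1+mu Z)(1+mu Z^2)(1+mu Z^3)
        / ((1+Z)(1+Z+Z^2)(1-Z)^3(1-mu Z^2)),
   with the (invertible: constant term 1) denominator cleared. *)
Definition mu_eqn (u : R) (z m : fps) : Prop :=
  let one := fconst 1 in
  fmul m (fmul (fadd one z)
          (fmul (fadd (fadd one z) (fpow z 2))
          (fmul (fpow (fsub one z) 3)
                (fsub one (fmul m (fpow z 2))))))
  = fmul (fconst (u - 1))
         (fmul (fadd one (fpow z 2))
         (fmul (fadd one (fmul m z))
         (fmul (fadd one (fmul m (fpow z 2)))
               (fadd one (fmul m (fpow z 3)))))).

Definition v_of (u Z : R) : R :=
  (u - 1) * Z * (1 + Z ^ 2) / ((1 + Z) * (1 + Z + Z ^ 2) * (1 - Z) ^ 3).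

Definition phi_of (u Z : R) : R :=
  let v := v_of u Z in
  acos ((- 9 * v * (1 + 4 * Z + Z ^ 2) + v ^ 3 * (1 - Z) ^ 6)
        / Rpower (3 + v ^ 2 * (1 - Z) ^ 4) (3 / 2)).

Definition mu_closed (u Z : R) : R :=
  let v := v_of u Z in
  1 / Z ^ 2 *
  (2 / (1 + v * (1 - Z) ^ 2 / 3
          + 2 / 3 * sqrt (3 + v ^ 2 * (1 - Z) ^ 4) * cos (phi_of u Z / 3))
   - 1).

(* Main.v *)
Require Import Defs.
From Stdlib Require Import Reals.
From Coquelicot Require Import Coquelicot.
From Stdlib Require Import Lra Lia Psatz.
Open Scope R_scope.

Lemma Rabs_le_between (a b : R) : Rabs a <= b -> -b <= a <= b.
Proof. unfold Rabs; destruct (Rcase_abs a); lra. Qed.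

Lemma cos3 (x : R) : cos (3 * x) = 4 * cos x ^ 3 - 3 * cos x.
Proof.
  replace (3 * x) with (2 * x + x) by ring.
  rewrite cos_plus, cos_2a, sin_2a.
  pose proof (sin2 x) as H. unfold Rsqr in H.
  replace (2 * sin x * cos x * sin x) with (2 * cos x * (sin x * sin x)) by ring.
  rewrite H. ring.
Qed.

Lemma Rpower32 (A : R) : 0 < A -> Rpower A (3/2) = A * sqrt A.
Proof.
  intro HA. replace (3/2) with (1 + /2) by field.
  rewrite Rpower_plus, Rpower_1, Rpower_sqrt; auto; lra.
Qed.

Lemma alg (u Z mu : R) :
  Z <> 0 -> Rabs Z <= 1/100 -> Rabs (v_of u Z) <= 1/100 -> Rabs (mu * Z^2) <= 1/100 ->
  mu * ((1+Z)*((1+Z+Z^2)*((1-Z)^3*(1-mu*Z^2)))) =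
    (u-1)*((1+Z^2)*((1+mu*Z)*((1+mu*Z^2)*(1+mu*Z^3)))) ->
  mu = mu_closed u Z.
Proof.
  intros HZ0 HZ Hv0 Hs0 E2.
  apply Rabs_le_between in HZ. apply Rabs_le_between in Hv0. apply Rabs_le_between in Hs0.
  set (v := v_of u Z) in *.
  set (D := (1+Z)*(1+Z+Z^2)*(1-Z)^3).
  assert (HD : D <> 0).
  { unfold D. assert (0 < 1 + Z) by lra. assert (0 < 1+Z+Z^2) by nra.
    assert (0 < (1-Z)^3) by (apply pow_lt; lra).
    apply Rgt_not_eq. apply Rmult_lt_0_compat; [apply Rmult_lt_0_compat|]; lra. }
  assert (Hv : v * D = (u-1)*Z*(1+Z^2)).
  { unfold v, v_of. fold D. field. exact HD. }
  set (s := mu * Z^2) in *.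
  assert (Hs : s*(1-s) = v*(Z+s)*(1+s)*(1+s*Z)).
  { apply (Rmult_eq_reg_r D); [|exact HD].
    transitivity (Z^2 * (mu * ((1+Z)*((1+Z+Z^2)*((1-Z)^3*(1-s)))))) .
    { unfold s, D. ring. }
    rewrite E2.
    transitivity ((v*D)*(Z+s)*(1+s)*(1+s*Z)).
    { rewrite Hv. unfold s. ring. }
    ring. }
  set (b := v*(1-Z)^2).
  set (a := 1 + v*(1-Z)^2/3).
  set (A := 3 + v^2*(1-Z)^4).
  set (num := -9*v*(1+4*Z+Z^2) + v^3*(1-Z)^6).
  set (x := 2/(1+s)).
  assert (Hs1 : 0 < 1 + s) by lra.
  set (yt := x - a).
  assert (Hyt : yt^3 - A/3*yt - 2*num/27 = 0).
  { assert (Hc : x^3 - (3+b)*x^2 + (2+2*b)*x + 4*v*Z = 0).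
    { apply (Rmult_eq_reg_r ((1+s)^3)); [|apply pow_nonzero; lra].
      rewrite Rmult_0_l.
      transitivity (-4 * (s*(1-s) - v*(Z+s)*(1+s)*(1+s*Z))).
      { unfold x, b. field. lra. }
      rewrite Hs. ring. }
    rewrite <- Hc. unfold yt, a, A, num, b. field. }
  assert (HA : 3 <= A). { unfold A. assert (0 <= v^2*(1-Z)^4) by (replace (v^2*(1-Z)^4) with ((v*(1-Z)^2)^2) by ring; apply pow2_ge_0). lra. }
  assert (HA2 : A <= 3 + 1/1000).
  { unfold A. assert (0 <= (1-Z)^2 <= 2) by nra. assert (0 <= v^2 <= 1/10000) by nra.
    replace ((1-Z)^4) with (((1-Z)^2)^2) by ring. nra. }
  assert (HsqA : 0 < sqrt A) by (apply sqrt_lt_R0; lra).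
  assert (HsqA2 : sqrt A * sqrt A = A) by (apply sqrt_sqrt; lra).
  assert (Hsq1 : 1 <= sqrt A) by nra.
  assert (Hsq2 : sqrt A <= 9/5) by nra.
  assert (Hnum : Rabs num <= 3).
  { apply Rabs_le. unfold num.
    assert (0 <= (1-Z)^2 <= 2) by nra.
    replace ((1-Z)^6) with (((1-Z)^2)^3) by ring.
    assert (Rabs v <= 1/100) by (apply Rabs_le; lra).
    assert (Rabs (v^3) <= 1/100).
    { rewrite <- RPow_abs. pose proof (Rabs_pos v).
      assert (Rabs v ^ 3 <= Rabs v) by (simpl; nra). lra. }
    clear H0. rename H1 into H0.
    apply Rabs_le_between in H0.
    assert (0 <= ((1-Z)^2)^3 <= 8) by (split; [apply pow_le; lra| apply Rle_trans with (2^3); [apply pow_incr; lra | lra]]).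
    split; nra. }
  set (Q := num / (A * sqrt A)).
  assert (HAs : 0 < A * sqrt A) by nra.
  assert (HQ : -1 <= Q <= 1).
  { apply Rabs_le_between in Hnum. unfold Q. split.
    - apply Rmult_le_reg_r with (A * sqrt A); [lra|]. field_simplify; nra.
    - apply Rmult_le_reg_r with (A * sqrt A); [lra|]. field_simplify; nra. }
  assert (Hphi : phi_of u Z = acos Q).
  { assert (Hpw : Rpower A (3/2) = A * sqrt A) by (apply Rpower32; lra).
    unfold phi_of. fold v. fold A. fold num. rewrite Hpw. reflexivity. }
  set (c := cos (phi_of u Z / 3)).
  assert (Hc3 : 4*c^3 - 3*c = Q).
  { unfold c. rewrite <- cos3. replace (3 * (phi_of u Z / 3)) with (phi_of u Z) by field.
    rewrite Hphi. apply cos_acos. exact HQ. }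
  assert (Hc12 : 1/2 <= c).
  { unfold c. rewrite <- cos_PI3. pose proof (acos_bound Q). rewrite Hphi.
    pose proof PI_RGT_0. apply cos_decr_1; lra. }
  set (yc := 2/3 * sqrt A * c).
  assert (Hyc : yc^3 - A/3*yc - 2*num/27 = 0).
  { transitivity (2/27 * (A * sqrt A) * (4*c^3 - 3*c) - 2*num/27).
    { unfold yc. set (sA := sqrt A) in *. rewrite <- HsqA2. field. }
    rewrite Hc3. unfold Q. field. lra. }
  assert (Hytb : 9/10 <= yt).
  { unfold yt, x, a.
    assert (HH : 0 <= (1-Z)^2 <= 2) by nra.
    assert (H : -(1/100) <= v*(1-Z)^2/3 <= 1/100) by (split; nra).
    assert (2/(1+s) >= 2/(1+1/100)).
    { apply Rle_ge. apply Rmult_le_reg_r with ((1+s)*(1+1/100)); [nra|]. field_simplify; lra. }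
    lra. }
  assert (Hycb : sqrt A / 3 <= yc) by (unfold yc; nra).
  assert (Heq : yt = yc).
  { assert (Hf : (yt - yc) * (yt^2 + yt*yc + yc^2 - A/3) = 0).
    { transitivity ((yt^3 - A/3*yt - 2*num/27) - (yc^3 - A/3*yc - 2*num/27)); [ring|].
      rewrite Hyt, Hyc. ring. }
    apply Rmult_integral in Hf. destruct Hf as [Hf|Hf]; [lra|].
    exfalso. nra. }
  unfold mu_closed. fold v.
  fold c. replace (2 / 3 * sqrt (3 + v ^ 2 * (1 - Z) ^ 4) * c) with yc by reflexivity.
  replace (1 + v * (1 - Z) ^ 2 / 3 + yc) with x.
  2:{ rewrite <- Heq. unfold yt, a. ring. }
  unfold x. unfold s. field. split; [|exact HZ0]. unfold s in Hs1. lra.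
Qed.

Definition Nr (r : R) (K : nat) (a : fps) : R :=
  sum_f_R0 (fun n => Rabs (a n) * r ^ n) K.

Lemma Nr_ext r K a b : (forall n, (n <= K)%nat -> a n = b n) -> Nr r K a = Nr r K b.
Proof. intro H. unfold Nr. apply sum_eq. intros i Hi. rewrite H; auto. Qed.

Lemma Nr_nonneg r K a : 0 <= r -> 0 <= Nr r K a.
Proof. intro Hr. unfold Nr. apply cond_pos_sum. intro n.
  apply Rmult_le_pos; [apply Rabs_pos| apply pow_le; auto]. Qed.

Lemma Nr_S r K a : Nr r (S K) a = Nr r K a + Rabs (a (S K)) * r ^ (S K).
Proof. reflexivity. Qed.

Lemma Nr_term r K a n : 0 <= r -> (n <= K)%nat -> Rabs (a n) * r ^ n <= Nr r K a.
Proof.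
  intros Hr. induction K; intro Hn.
  - assert (n = 0%nat) by lia. subst. unfold Nr. simpl. lra.
  - destruct (Nat.eq_dec n (S K)).
    + subst. rewrite Nr_S. pose proof (Nr_nonneg r K a Hr). lra.
    + rewrite Nr_S. assert (0 <= Rabs (a (S K)) * r ^ S K)
        by (apply Rmult_le_pos; [apply Rabs_pos| apply pow_le; auto]).
      specialize (IHK ltac:(lia)). lra.
Qed.

Lemma Nr_const r K c : Nr r K (fconst c) = Rabs c.
Proof.
  induction K.
  - unfold Nr. simpl. ring.
  - rewrite Nr_S, IHK. simpl fconst. rewrite Rabs_R0. ring.
Qed.

Lemma Nr_add r K a b : 0 <= r -> Nr r K (fadd a b) <= Nr r K a + Nr r K b.
Proof.
  intro Hr. unfold Nr. rewrite <- plus_sum. apply sum_Rle. intros n _.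
  unfold fadd. pose proof (Rabs_triang (a n) (b n)). pose proof (pow_le r n Hr). nra.
Qed.

Lemma Nr_sub r K a b : 0 <= r -> Nr r K (fsub a b) <= Nr r K a + Nr r K b.
Proof.
  intro Hr. unfold Nr. rewrite <- plus_sum. apply sum_Rle. intros n _.
  unfold fsub. pose proof (Rabs_triang (a n) (- b n)). rewrite Rabs_Ropp in H.
  pose proof (pow_le r n Hr). unfold Rminus. nra.
Qed.

Lemma Nr_mul r K a b : 0 <= r -> Nr r K (fmul a b) <= Nr r K a * Nr r K b.
Proof.
  intro Hr.
  set (A := fun n => Rabs (a n) * r ^ n). set (B := fun n => Rabs (b n) * r ^ n).
  apply Rle_trans with
    (sum_f_R0 (fun n => sum_f_R0 (fun k => A k * B (n - k)%nat) n) K).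
  { unfold Nr. apply sum_Rle. intros n _. unfold fmul.
    eapply Rle_trans.
    { apply Rmult_le_compat_r; [apply pow_le; auto| apply Rsum_abs]. }
    rewrite Rmult_comm, scal_sum. apply Req_le. apply sum_eq. intros k Hk.
    unfold A, B. rewrite Rabs_mult.
    replace (r ^ n) with (r ^ k * r ^ (n - k)) by (rewrite <- pow_add; f_equal; lia).
    ring. }
  destruct K.
  - unfold Nr, A, B. simpl. apply Req_le. ring.
  - unfold Nr. fold A B. rewrite (cauchy_finite A B (S K)) by lia.
    assert (0 <= sum_f_R0
       (fun k : nat =>
        sum_f_R0 (fun l : nat => A (S (l + k)) * B (S K - l)%nat)
          (Init.Nat.pred (S K - k))) (Init.Nat.pred (S K))).
    { apply cond_pos_sum. intro k. apply cond_pos_sum. intro l.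
      unfold A, B. apply Rmult_le_pos; apply Rmult_le_pos; try apply Rabs_pos; apply pow_le; auto. }
    lra.
Qed.

Lemma fmul_0 a b : fmul a b 0%nat = a 0%nat * b 0%nat.
Proof. reflexivity. Qed.

Lemma fpow_0 a k : fpow a k 0%nat = a 0%nat ^ k.
Proof. induction k; simpl. reflexivity. rewrite fmul_0, IHk. reflexivity. Qed.

Lemma sum_zero f n : (forall i, (i <= n)%nat -> f i = 0) -> sum_f_R0 f n = 0.
Proof.
  induction n; intro H; simpl. apply H; lia.
  rewrite IHn by (intros; apply H; lia). rewrite H by lia. ring.
Qed.

Lemma sum_single f n j : (j <= n)%nat -> (forall i, (i <= n)%nat -> i <> j -> f i = 0) ->
  sum_f_R0 f n = f j.
Proof.
  induction n; intros Hj H.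
  - assert (j = 0%nat) by lia. subst. reflexivity.
  - simpl. destruct (Nat.eq_dec j (S n)).
    + subst. rewrite sum_zero by (intros; apply H; lia). ring.
    + rewrite IHn by (try lia; intros; apply H; lia). rewrite (H (S n)) by lia. ring.
Qed.

Lemma fmul_one a n : fmul a (fconst 1) n = a n.
Proof.
  unfold fmul. rewrite (sum_single _ n n (le_n n)).
  2:{ intros i Hi Hn. destruct (n - i)%nat eqn:E; [lia| simpl; ring]. }
  rewrite Nat.sub_diag. simpl. ring.
Qed.

Lemma fmul_fX_S a n : fmul fX a (S n) = a n.
Proof.
  unfold fmul. rewrite (sum_single _ (S n) 1 ltac:(lia)).
  2:{ intros i Hi Hn. destruct i as [|[|i]]; [simpl; ring| lia | simpl; ring]. }
  simpl. rewrite Nat.sub_0_r. ring.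
Qed.

Lemma fmul_fX_0 a : fmul fX a 0%nat = 0.
Proof. unfold fmul. simpl. ring. Qed.

Lemma Nr_fX r K a : Nr r (S K) (fmul fX a) = r * Nr r K a.
Proof.
  induction K.
  - unfold Nr. simpl. rewrite fmul_fX_0, fmul_fX_S. rewrite Rabs_R0. ring.
  - rewrite Nr_S, IHK, Nr_S, fmul_fX_S. simpl. ring.
Qed.

Definition trunc (J : nat) (a : fps) : fps := fun n => if Nat.leb n J then a n else 0.

Lemma Nr_trunc r J a : Nr r (S J) (trunc J a) = Nr r J a.
Proof.
  rewrite Nr_S. unfold trunc at 2. rewrite (proj2 (Nat.leb_gt (S J) J)) by lia.
  rewrite Rabs_R0, Rmult_0_l, Rplus_0_r. apply Nr_ext. intros n Hn. unfold trunc.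
  rewrite (proj2 (Nat.leb_le n J)) by lia. reflexivity.
Qed.

Lemma Nr_trunc' r J a : Nr r J (trunc J a) = Nr r J a.
Proof.
  apply Nr_ext. intros n Hn. unfold trunc.
  rewrite (proj2 (Nat.leb_le n J)) by lia. reflexivity.
Qed.

Lemma Nr_mul_eq r K a b a' b' :
  (forall n k, (k <= n)%nat -> (n <= K)%nat -> a k * b (n - k)%nat = a' k * b' (n - k)%nat) ->
  Nr r K (fmul a b) = Nr r K (fmul a' b').
Proof.
  intro H. apply Nr_ext. intros n Hn. unfold fmul. apply sum_eq. intros k Hk. apply H; lia.
Qed.

Lemma Nr_mul_l r K a b : 0 <= r -> b 0%nat = 0 ->
  Nr r (S K) (fmul a b) <= Nr r K a * Nr r (S K) b.
Proof.
  intros Hr Hb. rewrite (Nr_mul_eq r (S K) a b (trunc K a) b).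
  - rewrite <- (Nr_trunc r K a). apply Nr_mul; auto.
  - intros n k Hk Hn. unfold trunc. destruct (Nat.leb k K) eqn:E. reflexivity.
    apply Nat.leb_gt in E. replace (n - k)%nat with 0%nat by lia. rewrite Hb. ring.
Qed.

Lemma Nr_mul_lr r K a b : 0 <= r -> a 0%nat = 0 -> b 0%nat = 0 ->
  Nr r (S K) (fmul a b) <= Nr r K a * Nr r K b.
Proof.
  intros Hr Ha Hb. rewrite (Nr_mul_eq r (S K) a b (trunc K a) (trunc K b)).
  - rewrite <- (Nr_trunc r K a), <- (Nr_trunc r K b). apply Nr_mul; auto.
  - intros n k Hk Hn. unfold trunc. destruct (Nat.leb k K) eqn:E.
    + destruct (Nat.leb (n - k) K) eqn:E2. reflexivity.
      apply Nat.leb_gt in E2. assert (k = 0%nat) by lia. subst. rewrite Ha. ring.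
    + apply Nat.leb_gt in E. replace (n - k)%nat with 0%nat by lia. rewrite Hb. simpl. ring.
Qed.

Definition fzero0 (X : fps) : fps := fun j => match j with O => 0 | S _ => X j end.

Lemma fmul_split a X n : fmul a X n = a n * X 0%nat + fmul a (fzero0 X) n.
Proof.
  unfold fmul.
  transitivity (sum_f_R0 (fun k => a k * fzero0 X (n - k)%nat +
                  (if Nat.eqb k n then a k * X 0%nat else 0)) n).
  { apply sum_eq. intros k Hk. unfold fzero0. destruct (n - k)%nat eqn:E.
    - rewrite (proj2 (Nat.eqb_eq k n)) by lia. ring.
    - rewrite (proj2 (Nat.eqb_neq k n)) by lia. ring. }
  rewrite plus_sum. rewrite (sum_single (fun k => if Nat.eqb k n then a k * X 0%nat else 0) n n (le_n n)).
  - cbv beta. rewrite Nat.eqb_refl. ring.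
  - intros i Hi Hin. cbv beta. rewrite (proj2 (Nat.eqb_neq i n)) by lia. reflexivity.
Qed.

Lemma Nr_fzero0 r K X : Nr r K (fzero0 X) = Nr r K X - Rabs (X 0%nat).
Proof.
  induction K.
  - unfold Nr. simpl. rewrite Rabs_R0. ring.
  - rewrite Nr_S, IHK, Nr_S. simpl. ring.
Qed.

Lemma Nr_pow r K a k : 0 <= r -> Nr r K (fpow a k) <= Nr r K a ^ k.
Proof.
  intro Hr. induction k; simpl.
  - rewrite Nr_const, Rabs_R1. lra.
  - eapply Rle_trans; [apply Nr_mul; auto|].
    apply Rmult_le_compat_l; [apply Nr_nonneg; auto| auto].
Qed.

Definition good (r : R) (a : fps) := exists C, forall K, Nr r K a <= C.

Lemma good_const r c : good r (fconst c).
Proof. exists (Rabs c). intro K. rewrite Nr_const. lra. Qed.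

Lemma fX_eq n : fX n = fmul fX (fconst 1) n.
Proof. destruct n. rewrite fmul_fX_0. reflexivity. rewrite fmul_fX_S. destruct n; reflexivity. Qed.

Lemma good_fX r : 0 <= r -> good r fX.
Proof.
  intro Hr. exists r. intro K. destruct K.
  - unfold Nr. simpl. rewrite Rabs_R0. lra.
  - rewrite (Nr_ext r (S K) fX (fmul fX (fconst 1))) by (intros; apply fX_eq).
    rewrite Nr_fX, Nr_const, Rabs_R1. lra.
Qed.

Lemma good_add r a b : 0 <= r -> good r a -> good r b -> good r (fadd a b).
Proof. intros Hr [C1 H1] [C2 H2]. exists (C1 + C2). intro K.
  eapply Rle_trans; [apply Nr_add; auto|]. specialize (H1 K); specialize (H2 K); lra. Qed.

Lemma good_sub r a b : 0 <= r -> good r a -> good r b -> good r (fsub a b).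
Proof. intros Hr [C1 H1] [C2 H2]. exists (C1 + C2). intro K.
  eapply Rle_trans; [apply Nr_sub; auto|]. specialize (H1 K); specialize (H2 K); lra. Qed.

Lemma good_mul r a b : 0 <= r -> good r a -> good r b -> good r (fmul a b).
Proof. intros Hr [C1 H1] [C2 H2]. exists (C1 * C2). intro K.
  eapply Rle_trans; [apply Nr_mul; auto|]. specialize (H1 K); specialize (H2 K).
  pose proof (Nr_nonneg r K a Hr). pose proof (Nr_nonneg r K b Hr).
  apply Rmult_le_compat; auto. Qed.

Lemma good_pow r a k : 0 <= r -> good r a -> good r (fpow a k).
Proof. intros Hr Ha. induction k; simpl. apply good_const. apply good_mul; auto. Qed.

Section Eval.
Variable r t : R.
Hypothesis Hr : 0 < r.
Hypothesis Ht : Rabs t < r.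

Definition Sm (a : fps) := Series (fun n => a n * t ^ n).

Lemma good_abs a : good r a -> ex_series (fun n => Rabs (a n * t ^ n)).
Proof.
  intros [C HC].
  apply (@ex_series_le R_AbsRing R_CompleteNormedModule _ (fun n => C * (Rabs t / r) ^ n)).
  - intro n. unfold norm; simpl. unfold abs; simpl.
    repeat rewrite Rabs_Rabsolu. rewrite Rabs_mult, <- RPow_abs.
    pose proof (Nr_term r n a n (Rlt_le _ _ Hr) (le_n n)). specialize (HC n).
    assert (E : Rabs t ^ n = r ^ n * (Rabs t / r) ^ n).
    { rewrite <- Rpow_mult_distr. f_equal. field. lra. }
    rewrite E. assert (0 <= (Rabs t / r) ^ n).
    { apply pow_le. apply Rmult_le_pos; [apply Rabs_pos| left; apply Rinv_0_lt_compat; lra]. }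
    nra.
  - apply (ex_series_scal_l C (fun n => (Rabs t / r) ^ n)). apply ex_series_geom.
    rewrite Rabs_right. apply Rmult_lt_reg_r with r; [lra|]. field_simplify; lra.
    apply Rle_ge, Rmult_le_pos; [apply Rabs_pos| left; apply Rinv_0_lt_compat; lra].
Qed.

Lemma Sm_is a : good r a -> is_series (fun n => a n * t ^ n) (Sm a).
Proof. intro Ha. apply Series_correct. apply ex_series_Rabs. apply good_abs; auto. Qed.

Lemma Sm_mul a b : good r a -> good r b -> Sm (fmul a b) = Sm a * Sm b.
Proof.
  intros Ha Hb. apply is_series_unique.
  pose proof (is_series_mult _ _ _ _ (Sm_is a Ha) (Sm_is b Hb) (good_abs a Ha) (good_abs b Hb)) as H.
  eapply is_series_ext; [|exact H]. intro n. simpl. unfold fmul.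
  rewrite Rmult_comm, scal_sum. apply sum_eq. intros k Hk.
  assert (Hp : t ^ n = t ^ k * t ^ (n - k)) by (rewrite <- pow_add; f_equal; lia).
  rewrite Hp. ring.
Qed.

Lemma Sm_add a b : good r a -> good r b -> Sm (fadd a b) = Sm a + Sm b.
Proof.
  intros Ha Hb. apply is_series_unique.
  pose proof (is_series_plus _ _ _ _ (Sm_is a Ha) (Sm_is b Hb)) as H.
  eapply is_series_ext; [|exact H]. intro n. unfold fadd. simpl. unfold plus; simpl. ring.
Qed.

Lemma Sm_sub a b : good r a -> good r b -> Sm (fsub a b) = Sm a - Sm b.
Proof.
  intros Ha Hb. apply is_series_unique.
  pose proof (is_series_minus _ _ _ _ (Sm_is a Ha) (Sm_is b Hb)) as H.
  eapply is_series_ext; [|exact H]. intro n. unfold fsub. simpl. unfold plus, opp; simpl. ring.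
Qed.

Lemma Sm_const c : Sm (fconst c) = c.
Proof.
  apply is_series_unique. apply is_series_Reals. intros eps Heps. exists 0%nat.
  intros n _. unfold R_dist. rewrite sum_single with (j := 0%nat); [|lia|].
  - simpl. rewrite Rabs_right; lra.
  - intros i _ Hi. destruct i; [lia| simpl; ring].
Qed.

Lemma Sm_fX : Sm fX = t.
Proof.
  apply is_series_unique. apply is_series_Reals. intros eps Heps. exists 1%nat.
  intros n Hn. unfold R_dist. rewrite sum_single with (j := 1%nat); [|lia|].
  - simpl. rewrite Rmult_1_r, Rmult_1_l, Rminus_eq_0, Rabs_R0. lra.
  - intros i _ Hi. destruct i as [|[|i]]; [simpl; ring| lia| simpl; ring].
Qed.

Lemma Sm_pow a k : good r a -> Sm (fpow a k) = Sm a ^ k.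
Proof.
  intro Ha. induction k; simpl. apply Sm_const.
  rewrite Sm_mul; [rewrite IHk; reflexivity| auto| apply good_pow; auto; lra].
Qed.

Lemma Sm_bound a C : (forall K, Nr r K a <= C) -> Rabs (Sm a) <= C.
Proof.
  intro HC. assert (Ha : good r a) by (exists C; auto).
  pose proof (Sm_is a Ha) as H. apply is_series_Reals in H.
  apply cv_cvabs in H.
  refine (@Rle_cv_lim _ (fun _ => C) _ _ _ H _).
  2:{ intros eps Heps. exists 0%nat. intros. unfold R_dist. rewrite Rminus_eq_0, Rabs_R0. lra. }
  - intro n. eapply Rle_trans; [apply Rsum_abs|]. eapply Rle_trans; [|apply (HC n)].
    unfold Nr. apply sum_Rle. intros i _. rewrite Rabs_mult, <- RPow_abs.
    apply Rmult_le_compat_l; [apply Rabs_pos|]. apply pow_incr. split; [apply Rabs_pos| lra].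
Qed.

End Eval.

Lemma z_coef z : Z_eqn z -> forall n,
  z n = fmul fX (fpow (fadd (fconst 1) z) 4) n
        - fmul z (fzero0 (fadd (fconst 1) (fpow z 2))) n.
Proof.
  intros [Hz0 Heq] n.
  assert (H := f_equal (fun f => f n) Heq). cbv beta in H.
  rewrite fmul_split in H. unfold fadd at 1 in H. rewrite fpow_0, Hz0 in H.
  simpl fconst in H. rewrite <- H. ring.
Qed.

Lemma z_bound r z : 0 < r <= 1/100 -> Z_eqn z -> forall K, Nr r K z <= 2*r.
Proof.
  intros Hr HZ. pose proof HZ as [Hz0 _].
  assert (Hr0 : 0 <= r) by lra.
  induction K.
  - unfold Nr. simpl. rewrite Hz0, Rabs_R0. lra.
  - set (X := fadd (fconst 1) (fpow z 2)).
    rewrite (Nr_ext r (S K) z (fsub (fmul fX (fpow (fadd (fconst 1) z) 4)) (fmul z (fzero0 X))))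
      by (intros; apply z_coef; auto).
    eapply Rle_trans; [apply Nr_sub; auto|].
    rewrite Nr_fX.
    set (n := Nr r K z) in *.
    assert (Hn0 : 0 <= n) by (apply Nr_nonneg; auto).
    assert (H1 : Nr r K (fpow (fadd (fconst 1) z) 4) <= (1 + n)^4).
    { eapply Rle_trans; [apply Nr_pow; auto|]. apply pow_incr. split; [apply Nr_nonneg; auto|].
      eapply Rle_trans; [apply Nr_add; auto|]. rewrite Nr_const, Rabs_R1. unfold n. lra. }
    assert (H2 : Nr r (S K) (fmul z (fzero0 X)) <= n * n^2).
    { eapply Rle_trans; [apply Nr_mul_lr; auto|]. apply Rmult_le_compat_l; auto.
      rewrite Nr_fzero0. unfold X at 2, fadd. rewrite fpow_0, Hz0. simpl fconst.
      replace (1 + 0^2) with 1 by ring. rewrite Rabs_R1.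
      assert (Nr r K X <= 1 + n^2).
      { unfold X. eapply Rle_trans; [apply Nr_add; auto|]. rewrite Nr_const, Rabs_R1.
        pose proof (Nr_pow r K z 2 Hr0). fold n in H. lra. }
      lra. }
    assert (H3 : (1+n)^4 <= 11/10).
    { apply Rle_trans with ((1 + 2/100)^4); [apply pow_incr; lra| simpl; lra]. }
    assert (H4 : n * n^2 <= 1/100 * n).
    { simpl. assert (n <= 1/50) by lra. nra. }
    assert (r * Nr r K (fpow (fadd (fconst 1) z) 4) <= r * (11/10)) by (apply Rmult_le_compat_l; lra).
    lra.
Qed.

Definition one := fconst 1.
Definition Wm z m := fmul (fadd one z) (fmul (fadd (fadd one z) (fpow z 2))
   (fmul (fpow (fsub one z) 3) (fsub one (fmul m (fpow z 2))))).
Definition Rm u z m := fmul (fconst (u - 1)) (fmul (fadd one (fpow z 2))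
   (fmul (fadd one (fmul m z)) (fmul (fadd one (fmul m (fpow z 2))) (fadd one (fmul m (fpow z 3)))))).

Lemma mu_eqn_eq u z m : mu_eqn u z m -> fmul m (Wm z m) = Rm u z m.
Proof. intro H. exact H. Qed.

Ltac c0 := repeat (first [rewrite fmul_0 | rewrite fpow_0 | progress unfold fadd, fsub, fconst]; cbv beta).

Lemma Wm0 z m : z 0%nat = 0 -> Wm z m 0%nat = 1.
Proof. intro H. unfold Wm, one. c0. rewrite H. ring. Qed.

Lemma Rm0 u z m : z 0%nat = 0 -> Rm u z m 0%nat = u - 1.
Proof. intro H. unfold Rm, one. c0. rewrite H. ring. Qed.

Lemma m_coef u z m : Z_eqn z -> mu_eqn u z m -> forall n,
  m n = Rm u z m n - fmul m (fzero0 (Wm z m)) n.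
Proof.
  intros [Hz0 _] Hm n. apply mu_eqn_eq in Hm.
  assert (H := f_equal (fun f => f n) Hm). cbv beta in H.
  rewrite fmul_split, Wm0 in H by auto. rewrite <- H. ring.
Qed.

Lemma Nr_mul_bound r K a b A B : 0 <= r -> Nr r K a <= A -> Nr r K b <= B ->
  Nr r K (fmul a b) <= A * B.
Proof.
  intros Hr Ha Hb. eapply Rle_trans; [apply Nr_mul; auto|].
  apply Rmult_le_compat; auto; apply Nr_nonneg; auto.
Qed.

Lemma Nr_add_bound r K a b A B : 0 <= r -> Nr r K a <= A -> Nr r K b <= B ->
  Nr r K (fadd a b) <= A + B.
Proof. intros Hr Ha Hb. eapply Rle_trans; [apply Nr_add; auto|]. lra. Qed.

Lemma Nr_sub_bound r K a b A B : 0 <= r -> Nr r K a <= A -> Nr r K b <= B ->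
  Nr r K (fsub a b) <= A + B.
Proof. intros Hr Ha Hb. eapply Rle_trans; [apply Nr_sub; auto|]. lra. Qed.

Lemma Nr_one r K : Nr r K one <= 1.
Proof. unfold one. rewrite Nr_const, Rabs_R1. lra. Qed.

Lemma Nr_pow_bound r K a k A : 0 <= r -> Nr r K a <= A -> Nr r K (fpow a k) <= A ^ k.
Proof.
  intros Hr Ha. eapply Rle_trans; [apply Nr_pow; auto|]. apply pow_incr.
  split; [apply Nr_nonneg|]; auto.
Qed.

Lemma m_bound u r z m : 0 < r -> 2*r*(2*Rabs(u-1)+1) <= 1/100 -> Z_eqn z -> mu_eqn u z m ->
  forall K, Nr r K m <= 2*Rabs(u-1)+1.
Proof.
  intros Hr HrM HZ Hm. pose proof HZ as [Hz0 _].
  set (M := 2*Rabs(u-1)+1) in *.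
  assert (Hu := Rabs_pos (u-1)).
  assert (Hr0 : 0 <= r) by lra.
  assert (Hr1 : r <= 1/200) by (unfold M in HrM; nra).
  assert (Hzb := z_bound r z ltac:(lra) HZ).
  induction K.
  - unfold Nr. simpl. rewrite (m_coef u z m HZ Hm 0%nat).
    rewrite Rm0 by auto. rewrite fmul_0. unfold fzero0. unfold M. rewrite Rmult_0_r, Rminus_0_r, Rmult_1_r. lra.
  - rewrite (Nr_ext r (S K) m (fsub (Rm u z m) (fmul m (fzero0 (Wm z m)))))
      by (intros; apply m_coef; auto).
    set (zeta := Nr r (S K) z). set (mu := Nr r K m) in *.
    assert (Hze : zeta <= 2*r) by apply Hzb.
    assert (Hze0 : 0 <= zeta) by (apply Nr_nonneg; auto).
    assert (Hmu0 : 0 <= mu) by (apply Nr_nonneg; auto).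
    assert (Hz2 : fpow z 2 0%nat = 0) by (rewrite fpow_0, Hz0; ring).
    assert (Hz3 : fpow z 3 0%nat = 0) by (rewrite fpow_0, Hz0; ring).
    assert (Hmz : Nr r (S K) (fmul m z) <= mu * zeta) by (apply Nr_mul_l; auto).
    assert (Hmz2 : Nr r (S K) (fmul m (fpow z 2)) <= mu * zeta^2).
    { eapply Rle_trans; [apply Nr_mul_l; auto|]. apply Rmult_le_compat_l; auto.
      apply Nr_pow_bound; [auto| unfold zeta; apply Rle_refl]. }
    assert (Hmz3 : Nr r (S K) (fmul m (fpow z 3)) <= mu * zeta^3).
    { eapply Rle_trans; [apply Nr_mul_l; auto|]. apply Rmult_le_compat_l; auto.
      apply Nr_pow_bound; [auto| unfold zeta; apply Rle_refl]. }
    assert (Hz1 : zeta <= 1/100) by lra.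
    assert (Hmze : mu * zeta <= 1/100) by (unfold M in *; nra).
    assert (Hmze2 : mu * zeta^2 <= 1/100) by (simpl; nra).
    assert (Hmze3 : mu * zeta^3 <= 1/100) by (simpl; nra).
    assert (HR : Nr r (S K) (Rm u z m) <= Rabs (u-1) * ((101/100) * ((101/100) * ((101/100) * (101/100))))).
    { unfold Rm. apply Nr_mul_bound; auto. rewrite Nr_const; lra.
      apply Nr_mul_bound; auto.
      { replace (101/100) with (1 + 1/100) by field. apply Nr_add_bound; auto. apply Nr_one.
        eapply Rle_trans; [apply Nr_pow_bound; eauto; apply Rle_refl|]. simpl. nra. }
      apply Nr_mul_bound; auto.
      { replace (101/100) with (1 + 1/100) by field. apply Nr_add_bound; [auto|apply Nr_one|unfold zeta in *; lra]. }
      apply Nr_mul_bound; auto.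
      { replace (101/100) with (1 + 1/100) by field. apply Nr_add_bound; [auto|apply Nr_one|unfold zeta in *; lra]. }
      { replace (101/100) with (1 + 1/100) by field. apply Nr_add_bound; [auto|apply Nr_one|unfold zeta in *; lra]. } }
    assert (HW : Nr r (S K) (Wm z m) <= (101/100) * ((102/100) * (((101/100)^3) * (101/100)))).
    { unfold Wm. apply Nr_mul_bound; auto.
      { replace (101/100) with (1 + 1/100) by field. apply Nr_add_bound; [auto|apply Nr_one|unfold zeta in *; lra]. }
      apply Nr_mul_bound; auto.
      { replace (102/100) with (1 + 1/100 + 1/100) by field. apply Nr_add_bound; auto.
        apply Nr_add_bound; [auto|apply Nr_one|unfold zeta in *; lra].
        eapply Rle_trans; [apply Nr_pow_bound; eauto; apply Rle_refl|]. simpl. nra. }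
      apply Nr_mul_bound; auto.
      { apply Nr_pow_bound; auto. replace (101/100) with (1 + 1/100) by field.
        apply Nr_sub_bound; [auto|apply Nr_one|unfold zeta in *; lra]. }
      { replace (101/100) with (1 + 1/100) by field. apply Nr_sub_bound; [auto|apply Nr_one|unfold zeta in *; lra]. } }
    assert (HWs : Nr r (S K) (fzero0 (Wm z m)) <= 8/100).
    { rewrite Nr_fzero0, Wm0 by auto. rewrite Rabs_R1. simpl in HW. lra. }
    eapply Rle_trans; [apply Nr_sub; auto|].
    assert (Nr r (S K) (fmul m (fzero0 (Wm z m))) <= mu * (8/100)).
    { eapply Rle_trans; [apply Nr_mul_l; auto|]. apply Rmult_le_compat_l; auto. }
    unfold M in *. nra.
Qed.

Lemma v_small u Z : Rabs Z <= 1/100 -> Rabs (u-1) * Rabs Z <= 1/200 -> Rabs (v_of u Z) <= 1/100.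
Proof.
  intros HZ Huz. apply Rabs_le_between in HZ as HZ'.
  unfold v_of.
  set (D := (1 + Z) * (1 + Z + Z ^ 2) * (1 - Z) ^ 3).
  assert (HD : 9/10 <= D).
  { unfold D. assert (A1 : 99/100 <= 1 + Z) by lra. assert (A2 : 99/100 <= 1+Z+Z^2) by nra.
    assert (A3 : (99/100)^3 <= (1-Z)^3) by (apply pow_incr; lra).
    apply Rle_trans with ((99/100)*(99/100)*(99/100)^3); [simpl; lra|].
    apply Rmult_le_compat; try lra; try (apply Rmult_le_compat; lra); try (simpl; nra). }
  unfold Rdiv. rewrite Rabs_mult, Rabs_inv by lra. rewrite (Rabs_right D) by lra.
  rewrite !Rabs_mult.
  assert (H1 : Rabs (1 + Z^2) <= 11/10) by (apply Rabs_le; nra).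
  assert (H2 : / D <= 10/9) by (replace (10/9) with (/(9/10)) by field; apply Rinv_le_contravar; lra).
  assert (H3 : 0 <= / D) by (left; apply Rinv_0_lt_compat; lra).
  pose proof (Rabs_pos (u-1)). pose proof (Rabs_pos Z). pose proof (Rabs_pos (1+Z^2)).
  assert (Rabs (u-1) * Rabs Z * Rabs (1+Z^2) <= 11/2000) by nra.
  assert (0 <= Rabs (u-1) * Rabs Z * Rabs (1+Z^2)) by (apply Rmult_le_pos; [apply Rmult_le_pos|]; auto).
  nra.
Qed.

Ltac good_tac := repeat (first [assumption | apply good_const | apply good_fX | apply good_pow | apply good_sub | apply good_add | apply good_mul | lra]).

Ltac push r t Hr Ht H := repeat first [ rewrite (Sm_pow r t Hr Ht) in H by good_tac
  | rewrite (Sm_mul r t Hr Ht) in H by good_tac | rewrite (Sm_add r t Hr Ht) in H by good_tac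
  | rewrite (Sm_sub r t Hr Ht) in H by good_tac | rewrite Sm_const in H | rewrite Sm_fX in H ].

Theorem proposition5 :
  forall (u : R) (z m : fps),
    Z_eqn z -> mu_eqn u z m ->
    exists eps : R, 0 < eps /\
      forall t : R, 0 < Rabs t < eps ->
        exists Zt mut : R,
          is_series (fun n => z n * t ^ n) Zt /\
          is_series (fun n => m n * t ^ n) mut /\
          mut = mu_closed u Zt.
Proof.
  intros u z m HZ Hm.
  set (M := 2*Rabs(u-1)+1).
  assert (HM : 1 <= M) by (unfold M; pose proof (Rabs_pos (u-1)); lra).
  set (r := 1/(200*M)).
  assert (Hr : 0 < r) by (unfold r; apply Rdiv_lt_0_compat; lra).
  assert (HrM : 2*r*M = 1/100) by (unfold r; field; lra).
  assert (Hr1 : r <= 1/200) by nra.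
  exists r. split; auto. intros t [Ht0 Ht].
  assert (Hzb := z_bound r z ltac:(lra) HZ).
  assert (Hmb := m_bound u r z m Hr ltac:(fold M; lra) HZ Hm). fold M in Hmb.
  assert (Hgz : good r z) by (exists (2*r); auto).
  assert (Hgm : good r m) by (exists M; auto).
  exists (Sm t z), (Sm t m).
  split; [apply (Sm_is r t Hr Ht); auto|].
  split; [apply (Sm_is r t Hr Ht); auto|].
  assert (HZb := Sm_bound r t Hr Ht z (2*r) Hzb).
  assert (HMb := Sm_bound r t Hr Ht m M Hmb).
  pose proof HZ as [_ Heq].
  apply (f_equal (Sm t)) in Heq. push r t Hr Ht Heq.
  apply mu_eqn_eq in Hm. apply (f_equal (Sm t)) in Hm. unfold Wm, Rm, one in Hm.
  push r t Hr Ht Hm.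
  set (Zt := Sm t z) in *. set (mut := Sm t m) in *.
  apply alg.
  - intro H0. rewrite H0 in Heq. assert (t = 0) by nra. rewrite H in Ht0. rewrite Rabs_R0 in Ht0. lra.
  - lra.
  - apply v_small. lra. pose proof (Rabs_pos Zt). unfold M in *. nra.
  - rewrite Rabs_mult, <- RPow_abs. pose proof (Rabs_pos Zt). pose proof (Rabs_pos mut).
    assert (A1 : Rabs mut * Rabs Zt <= 1/100).
    { apply Rle_trans with (M * (2*r)); [apply Rmult_le_compat; auto| lra]. }
    assert (A2 : Rabs Zt <= 1/100) by lra.
    simpl. rewrite Rmult_1_r, <- Rmult_assoc.
    apply Rle_trans with ((1/100) * Rabs Zt); [apply Rmult_le_compat_r; auto| lra].
  - exact Hm.
Qed.
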